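(* Suppose that $\theta\in(0,1]$, $M>1$, $T>1$, $n\ge 2M$ and $f\in\mathrm{PL}_n^2\cap G_M^2$. Then for any $k\in\{\lceil\sqrt n\rceil,\dots,\lfloor\theta n\rfloor-1\}$, \[\sum_{j=k}^{\lfloor\theta n\rfloor-1}\mathcal E^+_X(I_j,\Gamma_{M,T}(f,n),T)\ge\int_{k/n}^{\lfloor\theta n\rfloor/n}\Big(\sqrt{2R^*_X(f(s))}-\sqrt{f_X'(s)}\Big)^2ds-O\Big(\frac{M^4}{n^{1/4}}+\frac{M^3n}{T^{1/2}}\Big).\]
   Context: $O(a)$ denotes a quantity bounded in absolute value by $Ca$ for a universal constant $C$. Let $R(x,y)=\frac{x+1}{y+1}\vee\frac{y+1}{x+1}$, $P(x,y)=\frac{y+1}{2(x+1)}\mathbb 1_{x\ge y}+\big(1-\frac{x+1}{2(y+1)}\big)\mathbb 1_{x<y}$, $R_X=RP$, $R_Y=R(1-P)$. $R^*(x,y)=\frac xy\vee\frac yx$ if $x>0$ or $y>0$, $R^*(0,0)=1$; $P^*(x,y)=\frac y{2x}\mathbb 1_{x\ge y}+(1-\frac x{2y})\mathbb 1_{x<y}$ if $x>0$ or $y>0$, $P^*(0,0)=1/2$; $R^*_X=R^*P^*$ if $y>0$, $R^*_X(x,0)=1/2$. $\|\cdot\|$ is the max norm on $\mathbb R^2$. $E$ is the set of non-decreasing càdlàg $f:[0,1]\to\mathbb R$ with $f(0)=0$ ($f'(s):=\infty$ where not differentiable), with Lévy metric $d(f,g)=\inf\{r>0:f(x-r)-r<g(x)<f(x+r)+r\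 \forall x\in[-r,1+r]\}$ ($f(x)=f(0)$ for $x<0$, $f(1)$ for $x>1$), and on $E^2$ the max of coordinate distances; $f=(f_X,f_Y)$. $G_M=\{f\in E: s/M\le f(s)\le Ms\ \forall s\}$; $G_{M,T}=\{f\in E:s/M-2T^{-2/3}\le f(s)\le M(s+2T^{-2/3})\ \forall s\}$. $\mathrm{PL}_n$ is the set of continuous $f\in E$ linear on each $[i/n,(i+1)/n]$. $I_j=[j/n,(j+1)/n]$. $\Delta_n(f,g)=\max_{0\le i\le n}\|f(i/n)-g(i/n)\|$; $\Gamma_{M,T}(f,n)=B_{\Delta_n}(f,1/n^2)\cap B_d(f,1/n)\cap G_{M,T}^2$ (open balls). For a non-empty interval $I\subset[0,1]$ with infimum $I^-$, supremum $I^+$, length $|I|$, $F\subset E^2$, $T\ge1$: $R^-_X(I,F,T)=\inf\{R_X(Tg(s)):s\in I,g\in F\}$, $R^+_X(I,F,T)$ the corresponding sup; $x^-(s,F)=\inf\{g_X(s):g\in F\}$, $x^+(s,F)=\sup\{g_X(s):g\in F\}$. ''$X-$ case'': $2R^-_X|I|>x^+(I^+,F)-x^-(I^-,F)$; ''$X+$ case'': $x^-(I^+,F)-x^+(I^-,F)>2R^+_X|I|$. $\mathcal E^+_X(I,F,T)=(\sqrt{2R^-_X(I,F,T)|I|}-\sqrt{x^+(I^+,F)-x^-(I^-,F)})^2$ in the $X-$ case, $(\sqrt{2R^+_X(I,F,T)|I|}-\sqrt{x^-(I^+,F)-x^+(I^-,F)})^2$ in the $X+$ case, $0$ otherwise.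 *)

(* Defs.v *)
From Stdlib Require Import Reals Lra Lia List.
From Coquelicot Require Import Coquelicot.
Import ListNotations.
Open Scope R_scope.

Definition flr (x : R) : nat := Z.to_nat (Int_part x).
Definition cel (x : R) : nat := Z.to_nat (- Int_part (- x)).

Definition Rr (x y : R) : R := Rmax ((x + 1) / (y + 1)) ((y + 1) / (x + 1)).
Definition Pp (x y : R) : R :=
  if Rle_dec y x then (y + 1) / (2 * (x + 1)) else 1 - (x + 1) / (2 * (y + 1)).
Definition RX (x y : R) : R := Rr x y * Pp x y.

Definition Rstar (x y : R) : R :=
  if Rlt_dec 0 x then Rmax (x / y) (y / x)
  else if Rlt_dec 0 y then Rmax (x / y) (y / x) else 1.
Definition Pstar (x y : R) : R :=
  if Rlt_dec 0 x then (if Rle_dec y x then y / (2 * x) else 1 - x / (2 * y))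
  else if Rlt_dec 0 y then (if Rle_dec y x then y / (2 * x) else 1 - x / (2 * y))
  else / 2.
Definition RXstar (x y : R) : R :=
  if Req_EM_T y 0 then / 2 else Rstar x y * Pstar x y.

(** The space E: non-decreasing cadlag f : [0,1] -> R with f(0) = 0.
    Functions are represented as R -> R; only their values on [0,1] matter. *)
Definition inE (f : R -> R) : Prop :=
  f 0 = 0 /\
  (forall x y, 0 <= x -> x <= y -> y <= 1 -> f x <= f y) /\
  (forall x, 0 <= x < 1 -> filterlim f (at_right x) (locally (f x))) /\
  (forall x, 0 < x <= 1 -> exists l, filterlim f (at_left x) (locally l)).

Definition ext (f : R -> R) (x : R) : R :=
  if Rlt_dec x 0 then f 0 else if Rlt_dec 1 x then f 1 else f x.

Definition levy (f g : R -> R) : Rbar :=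
  Glb_Rbar (fun r => 0 < r /\
    forall x, - r <= x <= 1 + r ->
      ext f (x - r) - r < ext g x /\ ext g x < ext f (x + r) + r).

Definition G_M (M : R) (f : R -> R) : Prop :=
  inE f /\ forall s, 0 <= s <= 1 -> s / M <= f s <= M * s.
Definition G_MT (M T : R) (f : R -> R) : Prop :=
  inE f /\ forall s, 0 <= s <= 1 ->
    s / M - 2 * Rpower T (- (2 / 3)) <= f s <= M * (s + 2 * Rpower T (- (2 / 3))).

Definition PL (n : nat) (f : R -> R) : Prop :=
  inE f /\
  (forall x, 0 <= x <= 1 ->
     filterlim f (within (fun y => 0 <= y <= 1) (locally x)) (locally (f x))) /\
  (forall i : nat, (i < n)%nat -> forall s,
     INR i / INR n <= s <= INR (S i) / INR n ->
     f s = f (INR i / INR n) + (s - INR i / INR n) * INR n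
            * (f (INR (S i) / INR n) - f (INR i / INR n))).

Definition Delta (n : nat) (fX fY gX gY : R -> R) : R :=
  fold_right Rmax 0
    (map (fun i => Rmax (Rabs (fX (INR i / INR n) - gX (INR i / INR n)))
                        (Rabs (fY (INR i / INR n) - gY (INR i / INR n))))
         (seq 0 (S n))).

Definition Gamma (M T : R) (fX fY : R -> R) (n : nat) (gX gY : R -> R) : Prop :=
  Delta n fX fY gX gY < 1 / (INR n ^ 2) /\
  Rbar_lt (levy fX gX) (1 / INR n) /\ Rbar_lt (levy fY gY) (1 / INR n) /\
  G_MT M T gX /\ G_MT M T gY.

Definition RXminus (a b : R) (F : (R -> R) -> (R -> R) -> Prop) (T : R) : Rbar :=
  Glb_Rbar (fun r => exists s gX gY, a <= s <= b /\ F gX gY /\ r = RX (T * gX s) (T * gY s)).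
Definition RXplus (a b : R) (F : (R -> R) -> (R -> R) -> Prop) (T : R) : Rbar :=
  Lub_Rbar (fun r => exists s gX gY, a <= s <= b /\ F gX gY /\ r = RX (T * gX s) (T * gY s)).
Definition xminus (s : R) (F : (R -> R) -> (R -> R) -> Prop) : R :=
  real (Glb_Rbar (fun r => exists gX gY, F gX gY /\ r = gX s)).
Definition xplus (s : R) (F : (R -> R) -> (R -> R) -> Prop) : R :=
  real (Lub_Rbar (fun r => exists gX gY, F gX gY /\ r = gX s)).

Definition EXplus (a b : R) (F : (R -> R) -> (R -> R) -> Prop) (T : R) : R :=
  let dm := xplus b F - xminus a F in
  let dp := xminus b F - xplus a F in
  match RXminus a b F T with
  | Finite rm =>
      if Rlt_dec dm (2 * rm * (b - a)) then (sqrt (2 * rm * (b - a)) - sqrt dm) ^ 2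
      else match RXplus a b F T with
           | Finite rp =>
               if Rlt_dec (2 * rp * (b - a)) dp then (sqrt (2 * rp * (b - a)) - sqrt dp) ^ 2
               else 0
           | _ => 0
           end
  | _ => match RXplus a b F T with
         | Finite rp =>
             if Rlt_dec (2 * rp * (b - a)) dp then (sqrt (2 * rp * (b - a)) - sqrt dp) ^ 2
             else 0
         | _ => 0
         end
  end.

(* Main.v *)
Require Import Defs.
From Stdlib Require Import Reals Lra Lia List ZArith.
From Coquelicot Require Import Coquelicot.
Open Scope R_scope.
Import Defs.

Lemma sqrt_le_of_sq x y : 0 <= y -> x <= y ^ 2 -> sqrt x <= y.
Proof.
  intros Hy Hx. destruct (Rle_or_lt 0 x) as [H|H].
  - rewrite <- (sqrt_pow2 y Hy). apply sqrt_le_1_alt; lra.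
  - rewrite sqrt_neg_0; lra.
Qed.

Lemma sqrt_sub_add a b c : 0 <= b -> 0 <= c -> a <= b + c -> sqrt a <= sqrt b + sqrt c.
Proof.
  intros Hb Hc H. apply sqrt_le_of_sq.
  - pose proof (sqrt_pos b); pose proof (sqrt_pos c); lra.
  - pose proof (sqrt_pos b); pose proof (sqrt_pos c).
    pose proof (sqrt_sqrt b Hb); pose proof (sqrt_sqrt c Hc). nra.
Qed.

Lemma sq_aux B X c : 0 <= B -> 0 <= c -> 0 <= X -> B - c <= X -> B ^ 2 <= X ^ 2 + 2 * B * c.
Proof. intros. destruct (Rle_or_lt B c); nra. Qed.

Lemma core u D w2 e2 R1 R2 dm dp :
  0 <= u -> 0 <= D -> 0 <= w2 -> 0 <= e2 -> 0 <= R1 -> R1 <= R2 -> dp <= dm -> 0 <= dm ->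
  u - w2 <= R1 -> R2 <= u + w2 -> dm <= D + e2 -> D - e2 <= dp ->
  (sqrt u - sqrt D) ^ 2 <=
  (if Rlt_dec dm R1 then (sqrt R1 - sqrt dm) ^ 2
   else if Rlt_dec R2 dp then (sqrt R2 - sqrt dp) ^ 2 else 0)
  + 2 * (sqrt u + sqrt D) * (sqrt w2 + sqrt e2).
Proof.
  intros Hu HD Hw He HR1 HR12 Hd Hdm H1 H2 H3 H4.
  assert (s1 : sqrt u <= sqrt R1 + sqrt w2) by (apply sqrt_sub_add; lra).
  assert (s2 : sqrt R2 <= sqrt u + sqrt w2) by (apply sqrt_sub_add; lra).
  assert (s3 : sqrt dm <= sqrt D + sqrt e2) by (apply sqrt_sub_add; lra).
  assert (s4 : sqrt D <= sqrt (Rmax dp 0) + sqrt e2).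
  { apply sqrt_sub_add; [apply Rmax_r| lra |]. pose proof (Rmax_l dp 0). lra. }
  assert (m1 : sqrt (Rmax dp 0) <= sqrt dm) by (apply sqrt_le_1_alt; apply Rmax_lub; lra).
  assert (m2 : forall x y, x <= y -> sqrt x <= sqrt y) by (intros; apply sqrt_le_1_alt; lra).
  pose proof (sqrt_pos u); pose proof (sqrt_pos D); pose proof (sqrt_pos w2);
  pose proof (sqrt_pos e2); pose proof (sqrt_pos R1); pose proof (sqrt_pos R2);
  pose proof (sqrt_pos dm).
  set (c := sqrt w2 + sqrt e2).
  assert (Hc : 0 <= c) by (unfold c; lra).
  assert (E0 : 0 <= (if Rlt_dec dm R1 then (sqrt R1 - sqrt dm) ^ 2
   else if Rlt_dec R2 dp then (sqrt R2 - sqrt dp) ^ 2 else 0)).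
  { destruct (Rlt_dec dm R1); [apply pow2_ge_0|]. destruct (Rlt_dec R2 dp); [apply pow2_ge_0|lra]. }
  assert (HA : forall B, 0 <= B -> B <= sqrt u + sqrt D -> 2 * B * c <= 2 * (sqrt u + sqrt D) * c).
  { intros B HB HB2. apply Rmult_le_compat_r; lra. }
  destruct (Rle_or_lt (sqrt D) (sqrt u)) as [Hs|Hs].
  - destruct (Rlt_dec dm R1) as [r|r].
    + assert (sqrt dm < sqrt R1) by (apply sqrt_lt_1_alt; lra).
      assert ((sqrt u - sqrt D) ^ 2 <= (sqrt R1 - sqrt dm) ^ 2 + 2 * (sqrt u - sqrt D) * c)
        by (apply sq_aux; unfold c in *; lra).
      match goal with |- (?B0 - ?B1) ^ 2 <= _ => idtac end;
      first [ pose proof (HA (sqrt u - sqrt D) ltac:(lra) ltac:(lra))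
            | pose proof (HA (sqrt D - sqrt u) ltac:(lra) ltac:(lra)) ];
      first [ nra | unfold c in *; nra ].
    + assert (sqrt R1 <= sqrt dm) by (apply m2; lra).
      assert (sqrt u - sqrt D <= c) by (unfold c; lra).
      match goal with |- (?B0 - ?B1) ^ 2 <= _ => idtac end;
      first [ pose proof (HA (sqrt u - sqrt D) ltac:(lra) ltac:(lra))
            | pose proof (HA (sqrt D - sqrt u) ltac:(lra) ltac:(lra)) ];
      first [ nra | unfold c in *; nra ].
  - destruct (Rlt_dec dm R1) as [r|r].
    + assert (sqrt (Rmax dp 0) <= sqrt R2) by (apply m2; apply Rmax_lub; lra).
      assert (sqrt D - sqrt u <= c) by (unfold c; lra).
      match goal with |- (?B0 - ?B1) ^ 2 <= _ => idtac end;
      first [ pose proof (HA (sqrt u - sqrt D) ltac:(lra) ltac:(lra))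
            | pose proof (HA (sqrt D - sqrt u) ltac:(lra) ltac:(lra)) ];
      first [ nra | unfold c in *; nra ].
    + destruct (Rlt_dec R2 dp) as [r2|r2].
      * assert (H12 : Rmax dp 0 = dp) by (apply Rmax_left; lra).
        rewrite H12 in s4.
        assert ((sqrt D - sqrt u) ^ 2 <= (sqrt dp - sqrt R2) ^ 2 + 2 * (sqrt D - sqrt u) * c).
        { apply sq_aux; try (unfold c in *; lra).
          assert (sqrt R2 < sqrt dp) by (apply sqrt_lt_1_alt; lra). lra. }
        match goal with |- (?B0 - ?B1) ^ 2 <= _ => idtac end;
      first [ pose proof (HA (sqrt u - sqrt D) ltac:(lra) ltac:(lra))
            | pose proof (HA (sqrt D - sqrt u) ltac:(lra) ltac:(lra)) ];
      first [ nra | unfold c in *; nra ].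
      * assert (sqrt (Rmax dp 0) <= sqrt R2) by (apply m2; apply Rmax_lub; lra).
        assert (sqrt D - sqrt u <= c) by (unfold c; lra).
        match goal with |- (?B0 - ?B1) ^ 2 <= _ => idtac end;
      first [ pose proof (HA (sqrt u - sqrt D) ltac:(lra) ltac:(lra))
            | pose proof (HA (sqrt D - sqrt u) ltac:(lra) ltac:(lra)) ];
      first [ nra | unfold c in *; nra ].
Qed.

Lemma RX_form X Y : -1 < X -> -1 < Y -> RX X Y = Rmax (1/2) ((Y+1)/(X+1) - 1/2).
Proof.
  intros HX HY. unfold RX, Rr, Pp.
  set (u := (Y+1)/(X+1)).
  assert (Hu : u * (X+1) = Y+1) by (unfold u; field; lra).
  assert (Hv : (X+1)/(Y+1) = / u) by (unfold u; field; lra).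
  assert (Hp : 0 < u) by (unfold u; apply Rdiv_lt_0_compat; lra).
  rewrite Hv.
  destruct (Rle_dec Y X) as [h|h].
  - assert (u <= 1) by nra.
    assert (1 <= / u) by (rewrite <- Rinv_1; apply Rinv_le_contravar; lra).
    rewrite Rmax_left by lra. rewrite Rmax_left by lra.
    replace ((Y + 1) / (2 * (X + 1))) with (u / 2) by (unfold u; field; lra).
    field; lra.
  - assert (1 < u) by nra.
    assert (/ u < 1) by (rewrite <- Rinv_1; apply Rinv_lt_contravar; lra).
    rewrite Rmax_right by lra. rewrite Rmax_right by lra.
    replace ((X + 1) / (2 * (Y + 1))) with (/ u / 2) by (unfold u; field; lra).
    field; lra.
Qed.

Lemma RXstar_form x y : 0 < x -> 0 < y -> RXstar x y = Rmax (1/2) (y/x - 1/2).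
Proof.
  intros Hx Hy. unfold RXstar, Rstar, Pstar.
  destruct (Req_EM_T y 0) as [e|_]; [lra|].
  destruct (Rlt_dec 0 x) as [_|c]; [|lra].
  set (u := y/x).
  assert (Hu : u * x = y) by (unfold u; field; lra).
  assert (Hv : x/y = / u) by (unfold u; field; lra).
  assert (Hp : 0 < u) by (unfold u; apply Rdiv_lt_0_compat; lra).
  rewrite Hv.
  destruct (Rle_dec y x) as [h|h].
  - assert (u <= 1) by nra.
    assert (1 <= / u) by (rewrite <- Rinv_1; apply Rinv_le_contravar; lra).
    rewrite Rmax_left by lra. rewrite Rmax_left by lra.
    replace (y / (2 * x)) with (u / 2) by (unfold u; field; lra).
    field; lra.
  - assert (1 < u) by nra.
    assert (/ u < 1) by (rewrite <- Rinv_1; apply Rinv_lt_contravar; lra).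
    rewrite Rmax_right by lra. rewrite Rmax_right by lra.
    replace (x / (2 * y)) with (/ u / 2) by (unfold u; field; lra).
    field; lra.
Qed.

Lemma Rmax_lip c a b : Rabs (Rmax c a - Rmax c b) <= Rabs (a - b).
Proof.
  unfold Rmax; destruct (Rle_dec c a); destruct (Rle_dec c b);
  unfold Rabs; repeat destruct Rcase_abs; lra.
Qed.

Lemma glb_fin (E : R -> Prop) lo e : (forall r, E r -> lo <= r) -> E e ->
  exists g, Glb_Rbar E = Finite g /\ lo <= g /\ g <= e.
Proof.
  intros Hlo He. destruct (Glb_Rbar_correct E) as [H1 H2].
  pose proof (H1 e He) as Ha.
  assert (Hb : Rbar_le lo (Glb_Rbar E)) by (apply H2; intros x Hx; simpl; apply Hlo; auto).
  destruct (Glb_Rbar E) as [g| |]; simpl in *; try contradiction.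
  exists g; auto.
Qed.

Lemma lub_fin (E : R -> Prop) hi e : (forall r, E r -> r <= hi) -> E e ->
  exists g, Lub_Rbar E = Finite g /\ e <= g /\ g <= hi.
Proof.
  intros Hhi He. destruct (Lub_Rbar_correct E) as [H1 H2].
  pose proof (H1 e He) as Ha.
  assert (Hb : Rbar_le (Lub_Rbar E) hi) by (apply H2; intros x Hx; simpl; apply Hhi; auto).
  destruct (Lub_Rbar E) as [g| |]; simpl in *; try contradiction.
  exists g; auto.
Qed.

Lemma fold_ge (phi : nat -> R) l i : In i l -> phi i <= fold_right Rmax 0 (map phi l).
Proof.
  induction l as [|x l IH]; simpl; [tauto|].
  intros [->|H].
  - apply Rmax_l.
  - eapply Rle_trans; [apply IH; auto| apply Rmax_r].
Qed.

Lemma fold_le (phi : nat -> R) l c : 0 <= c -> (forall i, In i l -> phi i <= c) ->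
  fold_right Rmax 0 (map phi l) <= c.
Proof.
  intros Hc. induction l as [|x l IH]; simpl; intros H; [lra|].
  apply Rmax_lub; [apply H; auto| apply IH; intros; apply H; auto].
Qed.

Lemma Delta_pt n fX fY gX gY e i : Delta n fX fY gX gY < e -> (i <= n)%nat ->
  Rabs (fX (INR i / INR n) - gX (INR i / INR n)) < e /\
  Rabs (fY (INR i / INR n) - gY (INR i / INR n)) < e.
Proof.
  intros H Hi. unfold Delta in H.
  assert (Hin : In i (seq 0 (S n))) by (apply in_seq; lia).
  pose proof (fold_ge (fun i => Rmax (Rabs (fX (INR i / INR n) - gX (INR i / INR n)))
                        (Rabs (fY (INR i / INR n) - gY (INR i / INR n)))) _ i Hin) as Hf.
  cbv beta in Hf. pose proof (Rmax_l (Rabs (fX (INR i / INR n) - gX (INR i / INR n)))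
                        (Rabs (fY (INR i / INR n) - gY (INR i / INR n)))).
  pose proof (Rmax_r (Rabs (fX (INR i / INR n) - gX (INR i / INR n)))
                        (Rabs (fY (INR i / INR n) - gY (INR i / INR n)))).
  split; lra.
Qed.

Lemma ext_mono f : inE f -> forall x y, x <= y -> ext f x <= ext f y.
Proof.
  intros [_ [Hm _]] x y Hxy. unfold ext.
  destruct (Rlt_dec x 0); destruct (Rlt_dec y 0); destruct (Rlt_dec 1 x); destruct (Rlt_dec 1 y);
    try lra; apply Hm; lra.
Qed.

Lemma levy_self f n : inE f -> (0 < INR n) -> Rbar_lt (levy f f) (1 / INR n).
Proof.
  intros Hf Hn. unfold levy.
  set (r := 1 / (2 * INR n)).
  assert (Hr : 0 < r) by (unfold r; apply Rdiv_lt_0_compat; lra).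
  destruct (Glb_Rbar_correct (fun r : R => 0 < r /\
    (forall x : R, - r <= x <= 1 + r -> ext f (x - r) - r < ext f x /\ ext f x < ext f (x + r) + r)))
    as [H1 _].
  assert (Hin : Rbar_le (Glb_Rbar (fun r : R => 0 < r /\
    (forall x : R, - r <= x <= 1 + r -> ext f (x - r) - r < ext f x /\ ext f x < ext f (x + r) + r))) r).
  { apply H1. split; auto. intros x _. pose proof (ext_mono f Hf (x - r) x ltac:(lra)).
    pose proof (ext_mono f Hf x (x + r) ltac:(lra)). lra. }
  eapply Rbar_le_lt_trans; [exact Hin|]. simpl. unfold r.
  apply Rmult_lt_compat_l; [lra|]. apply Rinv_lt_contravar; nra.
Qed.

Lemma Gamma_self M T fX fY n : 0 < INR n -> 1 < T -> G_M M fX -> G_M M fY -> 0 < M ->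
  Gamma M T fX fY n fX fY.
Proof.
  intros Hn HT [HfX HbX] [HfY HbY] HM. unfold Gamma.
  assert (Hp : 0 < Rpower T (- (2 / 3))) by (unfold Rpower; apply exp_pos).
  split; [|split; [|split; [|split]]].
  - eapply Rle_lt_trans with 0.
    + unfold Delta. apply fold_le; [lra|]. intros i _.
      rewrite !Rminus_diag, Rabs_R0, Rmax_left; lra.
    + apply Rdiv_lt_0_compat; [lra|]. apply pow_lt; lra.
  - apply levy_self; auto.
  - apply levy_self; auto.
  - split; auto. intros s Hs. specialize (HbX s Hs). nra.
  - split; auto. intros s Hs. specialize (HbY s Hs). nra.
Qed.

Lemma box M T fX fY n gX gY j s : Gamma M T fX fY n gX gY -> (j < n)%nat ->
  INR j / INR n <= s <= INR (S j) / INR n ->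
  fX (INR j / INR n) - 1 / INR n ^ 2 < gX s < fX (INR (S j) / INR n) + 1 / INR n ^ 2 /\
  fY (INR j / INR n) - 1 / INR n ^ 2 < gY s < fY (INR (S j) / INR n) + 1 / INR n ^ 2.
Proof.
  intros [HD [_ [_ [[HgX _] [HgY _]]]]] Hj Hs.
  assert (Hn : 0 < INR n) by (apply lt_0_INR; lia).
  assert (H0 : 0 <= INR j / INR n) by (apply Rdiv_le_0_compat; [apply pos_INR|lra]).
  assert (H1 : INR (S j) / INR n <= 1).
  { apply (Rmult_le_reg_r (INR n)); [lra|]. unfold Rdiv. rewrite Rmult_assoc, Rinv_l by lra.
    rewrite Rmult_1_r, Rmult_1_l. apply le_INR; lia. }
  destruct (Delta_pt n fX fY gX gY _ j HD ltac:(lia)) as [A1 A2].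
  destruct (Delta_pt n fX fY gX gY _ (S j) HD ltac:(lia)) as [B1 B2].
  destruct HgX as [_ [MX _]]. destruct HgY as [_ [MY _]].
  pose proof (MX (INR j / INR n) s ltac:(lra) ltac:(lra) ltac:(lra)).
  pose proof (MX s (INR (S j) / INR n) ltac:(lra) ltac:(lra) ltac:(lra)).
  pose proof (MY (INR j / INR n) s ltac:(lra) ltac:(lra) ltac:(lra)).
  pose proof (MY s (INR (S j) / INR n) ltac:(lra) ltac:(lra) ltac:(lra)).
  apply Rabs_def2 in A1, A2, B1, B2. lra.
Qed.

Lemma abs_le_by_mul d b Q : 0 < Q -> Rabs (d * Q) <= b * Q -> Rabs d <= b.
Proof.
  intros HQ H. rewrite Rabs_mult, (Rabs_pos_eq Q) in H by lra.
  apply Rmult_le_reg_r with Q; auto.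
Qed.

Lemma T_diff x y T : 0 < x -> 0 <= y -> 0 < T ->
  Rabs ((T * y + 1) / (T * x + 1) - y / x) <= (1 + y / x) / (T * x).
Proof.
  intros Hx Hy HT. assert (n1 : T * x + 1 <> 0) by nra. assert (n2 : x <> 0) by lra.
  assert (n3 : T * x <> 0) by nra. apply abs_le_by_mul with (Q := T * x * x) ; [nra|].
  assert (E1 : ((T * y + 1) / (T * x + 1) - y / x) * (T * x * x) = (x - y) * (T * x / (T * x + 1)))
    by (field; repeat split; auto).
  assert (E2 : (1 + y / x) / (T * x) * (T * x * x) = x + y) .
  { field. split; lra. }
  rewrite E1, E2, Rabs_mult.
  assert (0 <= T * x / (T * x + 1) <= 1).
  { split. apply Rdiv_le_0_compat; nra. apply (Rmult_le_reg_r (T*x+1)); [nra|].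
    unfold Rdiv; rewrite Rmult_assoc, Rinv_l by nra. lra. }
  rewrite (Rabs_pos_eq (T * x / (T * x + 1))) by lra.
  assert (Rabs (x - y) <= x + y) by (unfold Rabs; destruct Rcase_abs; lra).
  pose proof (Rabs_pos (x - y)). nra.
Qed.

Lemma ratio_diff x y xs ys xl yu dx dy : 0 < xl -> xl <= x -> xl <= xs -> 0 <= y <= yu ->
  Rabs (x - xs) <= dx -> Rabs (y - ys) <= dy ->
  Rabs (y / x - ys / xs) <= yu * dx / (xl * xl) + dy / xl.
Proof.
  intros Hl Hx Hxs Hy Hdx Hdy.
  assert (E : y / x - ys / xs = y * (xs - x) / (x * xs) + (y - ys) / xs) by (field; lra).
  rewrite E. eapply Rle_trans; [apply Rabs_triang|]. apply Rplus_le_compat.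
  - unfold Rdiv. rewrite Rabs_mult, Rabs_mult, (Rabs_pos_eq y) by lra.
    rewrite Rabs_Rinv by nra. rewrite (Rabs_pos_eq (x * xs)) by nra.
    rewrite <- Rabs_Ropp, Ropp_minus_distr.
    apply Rmult_le_compat; try (apply Rmult_le_pos; try lra; apply Rabs_pos).
    + apply Rlt_le, Rinv_0_lt_compat; nra.
    + apply Rmult_le_compat; try lra; apply Rabs_pos.
    + apply Rinv_le_contravar; nra.
  - unfold Rdiv. rewrite Rabs_mult, Rabs_Rinv by lra. rewrite (Rabs_pos_eq xs) by lra.
    apply Rmult_le_compat; try lra; try apply Rabs_pos.
    apply Rlt_le, Rinv_0_lt_compat; lra.
    apply Rinv_le_contravar; lra.
Qed.

Lemma div_le_r X Y a : 0 < a -> X <= Y * a -> X / a <= Y.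
Proof. intros Ha H. apply (Rmult_le_reg_r a); auto. unfold Rdiv. rewrite Rmult_assoc, Rinv_l by lra. lra. Qed.

Lemma K_bound M T a h r nr eps x0 x1 y0 y1 xs ys x y :
  1 < M -> 1 < T -> 0 < a -> 0 < h -> 0 < r -> 0 < nr -> 0 < eps ->
  a / M <= x0 -> a / M <= y0 -> x0 <= x1 -> y0 <= y1 -> y1 <= M * (a + h) -> h <= a ->
  eps * (2 * M) <= a -> 2 * eps <= h -> h * (r * r) <= a -> 1 <= a * (r * r) ->
  M * (r * r) <= nr ^ 2 -> h * nr = 1 ->
  x0 <= xs <= x1 -> y0 <= ys <= y1 -> x0 - eps < x < x1 + eps -> y0 - eps < y < y1 + eps ->
  Rabs (RX (T * x) (T * y) - Rmax (1/2) (ys / xs - 1/2)) <=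
  14 * M ^ 3 * (((x1 - x0) + (y1 - y0)) * nr + 2) / (r * r) + 14 * M ^ 2 * nr ^ 2 / T.
Proof.
  intros HM HT Ha Hh Hr Hn He Hx0 Hy0 Hx01 Hy01 Hy1 Hha Hea Heh Hhr Har Hmr Hhn Hxs Hys Hx Hy.
  set (xl := a / (2 * M)). set (yu := 3 * M * a).
  assert (Hxl : 0 < xl) by (unfold xl; apply Rdiv_lt_0_compat; lra).
  assert (HaM : a / M = 2 * xl) by (unfold xl; field; lra).
  assert (Hexl : eps <= xl) by (unfold xl; apply Rmult_le_reg_r with (2*M); [lra|]; unfold Rdiv; rewrite Rmult_assoc, Rinv_l by lra; lra).
  assert (Hyu : y1 + eps <= yu).
  { unfold yu. assert (eps <= a) by (nra). nra. }
  assert (Hxlx : xl <= x) by lra. assert (Hxlxs : xl <= xs) by lra.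
  assert (Hy0p : 0 < y0) by lra.
  rewrite RX_form by nra.
  eapply Rle_trans; [apply Rmax_lip|].
  replace ((T * y + 1) / (T * x + 1) - 1 / 2 - (ys / xs - 1 / 2)) with
    (((T * y + 1) / (T * x + 1) - y / x) + (y / x - ys / xs)) by ring.
  eapply Rle_trans; [apply Rabs_triang|].
  rewrite Rplus_comm. apply Rplus_le_compat.
  - eapply Rle_trans.
    apply (ratio_diff x y xs ys xl yu ((x1 - x0) + 2 * eps) ((y1 - y0) + 2 * eps)); try lra.
    + unfold Rabs; destruct Rcase_abs; lra.
    + unfold Rabs; destruct Rcase_abs; lra.
    + replace (yu * (x1 - x0 + 2 * eps) / (xl * xl) + (y1 - y0 + 2 * eps) / xl) with
        ((12 * M ^ 3 * (x1 - x0 + 2 * eps) + 2 * M * (y1 - y0 + 2 * eps)) / a)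
        by (unfold xl, yu; field; lra).
      apply div_le_r; [lra|].
      assert (E1 : 12 * M ^ 3 * (x1 - x0 + 2 * eps) + 2 * M * (y1 - y0 + 2 * eps)
              <= 14 * M ^ 3 * ((x1 - x0) + (y1 - y0) + 4 * eps)).
      { assert (M <= M ^ 3) by nra. nra. }
      assert (E2 : (x1 - x0) + (y1 - y0) + 4 * eps <= h * (((x1 - x0) + (y1 - y0)) * nr + 2)).
      { replace (h * (((x1 - x0) + (y1 - y0)) * nr + 2)) with (((x1 - x0) + (y1 - y0)) * (h * nr) + 2 * h) by ring.
        rewrite Hhn. lra. }
      set (Q := ((x1 - x0) + (y1 - y0)) * nr + 2).
      assert (0 <= Q) by (unfold Q; nra).
      assert (E3 : h <= a / (r * r)) by (apply Rmult_le_reg_r with (r*r); [nra|]; unfold Rdiv; rewrite Rmult_assoc, Rinv_l by nra; lra).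
      replace (14 * M ^ 3 * Q / (r * r) * a) with (14 * M ^ 3 * Q * (a / (r * r))) by (field; lra).
      assert (0 < M ^ 3) by (apply pow_lt; lra).
      assert (14 * M ^ 3 * (h * Q) <= 14 * M ^ 3 * (Q * (a / (r * r)))).
      { apply Rmult_le_compat_l; [lra|]. rewrite Rmult_comm. apply Rmult_le_compat_l; lra. }
      assert (14 * M ^ 3 * ((x1 - x0) + (y1 - y0) + 4 * eps) <= 14 * M ^ 3 * (h * Q))
        by (apply Rmult_le_compat_l; [lra| unfold Q; lra]).
      lra.
  - eapply Rle_trans; [apply T_diff; lra|].
    assert (Hyx : y / x <= 6 * M ^ 2).
    { replace (6 * M ^ 2) with (yu / xl) by (unfold yu, xl; field; lra).
      unfold Rdiv. apply Rmult_le_compat; try lra.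
      apply Rlt_le, Rinv_0_lt_compat; lra. apply Rinv_le_contravar; lra. }
    assert (0 <= y / x) by (apply Rdiv_le_0_compat; lra).
    apply Rle_trans with ((1 + 6 * M ^ 2) / (T * xl)).
    { unfold Rdiv. apply Rmult_le_compat; try lra.
      apply Rlt_le, Rinv_0_lt_compat; nra. apply Rinv_le_contravar; nra. }
    replace ((1 + 6 * M ^ 2) / (T * xl)) with ((1 + 6 * M ^ 2) * (2 * M) / (T * a)) by (unfold xl; field; lra).
    apply div_le_r; [nra|].
    replace (14 * M ^ 2 * nr ^ 2 / T * (T * a)) with (14 * M ^ 2 * nr ^ 2 * a) by (field; lra).
    assert (A1 : (1 + 6 * M ^ 2) * (2 * M) <= 14 * M ^ 3) by nra.
    assert (A2 : 14 * M ^ 3 <= 14 * M ^ 2 * (M * (r * r)) * a) by nra.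
    assert (A3 : 0 <= 14 * M ^ 2 * a) by nra.
    assert (A4: 14 * M ^ 2 * (M * (r * r)) * a <= 14 * M ^ 2 * nr ^ 2 * a).
    { replace (14 * M ^ 2 * (M * (r * r)) * a) with ((14 * M ^ 2 * a) * (M * (r * r))) by ring.
      replace (14 * M ^ 2 * nr ^ 2 * a) with ((14 * M ^ 2 * a) * nr ^ 2) by ring.
      apply Rmult_le_compat_l; lra. }
    lra.
Qed.

Lemma sqrt_le_self z : 1 <= z -> sqrt z <= z.
Proof. intros. apply sqrt_le_of_sq; nra. Qed.

Lemma sqrt_le_1plus z : 0 <= z -> sqrt z <= 1 + z.
Proof. intros. apply sqrt_le_of_sq; nra. Qed.

Lemma num_bound M r nr T h rho L LY :
  1 < M -> 1 <= r -> 0 < h -> h * (r * r) <= 1 -> 0 < nr -> 1 < T -> 0 <= L -> 0 <= LY ->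
  1/2 <= rho <= 6 * M ^ 2 ->
  2 * (sqrt (h * (2 * rho)) + sqrt (h * L)) *
    (sqrt (h * (2 * (14 * M ^ 3 * ((L + LY) + 2) / (r * r) + 14 * M ^ 2 * nr ^ 2 / T)))
     + sqrt (h * (2 * h)))
  <= h * (1 + (L + LY)) * (140 * (M ^ 3 / r + M ^ 2 * nr / sqrt T)).
Proof.
  intros HM Hr Hh Hhr Hn HT HL HLY Hrho.
  set (Lam := L + LY).
  set (w := 14 * M ^ 3 * (Lam + 2) / (r * r) + 14 * M ^ 2 * nr ^ 2 / T).
  assert (Hw : 0 <= w).
  { assert (0 < M ^ 3) by (apply pow_lt; lra).
    assert (0 <= M ^ 2 * nr ^ 2) by nra.
    unfold w. apply Rplus_le_le_0_compat; apply Rdiv_le_0_compat; unfold Lam; nra. }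
  rewrite (sqrt_mult h (2 * rho)) by nra. rewrite (sqrt_mult h L) by nra.
  rewrite (sqrt_mult h (2 * w)) by nra. rewrite (sqrt_mult h (2 * h)) by nra.
  set (sh := sqrt h). assert (Hsh : sh * sh = h) by (apply sqrt_sqrt; lra).
  assert (sh0 : 0 <= sh) by apply sqrt_pos.
  set (A := sqrt (2 * rho)). set (B := sqrt L). set (C := sqrt (2 * w)). set (D := sqrt (2 * h)).
  assert (EQ : 2 * (sh * A + sh * B) * (sh * C + sh * D) = h * (2 * ((A + B) * (C + D))))
    by (rewrite <- Hsh; ring).
  rewrite EQ. rewrite Rmult_assoc. apply Rmult_le_compat_l; [lra|].
  set (sT := sqrt T). assert (HsT : sT * sT = T) by (apply sqrt_sqrt; lra).
  assert (sT0 : 0 < sT) by (apply sqrt_lt_R0; lra).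
  set (S := sqrt (Lam + 2)).
  assert (HS : S * S = Lam + 2) by (apply sqrt_sqrt; unfold Lam; lra).
  assert (S1 : S <= Lam + 2) by (apply sqrt_le_self; unfold Lam; lra).
  assert (S0 : 0 <= S) by apply sqrt_pos.
  assert (HA : A <= 4 * M) by (apply sqrt_le_of_sq; nra).
  assert (A0 : 0 <= A) by apply sqrt_pos.
  assert (B0 : 0 <= B) by apply sqrt_pos.
  assert (HB : B <= 1 + Lam) by (unfold B; eapply Rle_trans; [apply sqrt_le_1plus; lra| unfold Lam; lra]).
  assert (HBS : B <= S) by (apply sqrt_le_1_alt; unfold Lam; lra).
  assert (HC : C <= 6 * M ^ 2 * S / r + 6 * M * nr / sT).
  { apply sqrt_le_of_sq.
    - apply Rplus_le_le_0_compat; apply Rdiv_le_0_compat; nra.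
    - unfold w. 
      assert (E : (6 * M ^ 2 * S / r + 6 * M * nr / sT) ^ 2 =
        36 * M ^ 4 * (Lam + 2) / (r * r) + 36 * M ^ 2 * nr ^ 2 / T + 2 * (6 * M ^ 2 * S / r) * (6 * M * nr / sT)).
      { rewrite <- HS, <- HsT. field. lra. }
      rewrite E.
      assert (0 <= 2 * (6 * M ^ 2 * S / r) * (6 * M * nr / sT)).
      { apply Rmult_le_pos; [apply Rmult_le_pos|]; try apply Rdiv_le_0_compat; nra. }
      assert (2 * (14 * M ^ 3 * (Lam + 2) / (r * r)) <= 36 * M ^ 4 * (Lam + 2) / (r * r)).
      { unfold Rdiv. assert (0 < / (r * r)) by (apply Rinv_0_lt_compat; nra).
        assert (28 * M ^ 3 <= 36 * M ^ 4) by (assert (0 < M ^ 3) by (apply pow_lt; lra); nra).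
        assert (0 <= (Lam + 2) * / (r * r)) by (unfold Lam; nra). nra. }
      assert (2 * (14 * M ^ 2 * nr ^ 2 / T) <= 36 * M ^ 2 * nr ^ 2 / T).
      { unfold Rdiv. assert (0 < / T) by (apply Rinv_0_lt_compat; lra).
        assert (0 <= M ^ 2 * nr ^ 2) by nra. nra. }
      lra. }
  assert (HD : D <= 2 / r).
  { apply sqrt_le_of_sq. apply Rdiv_le_0_compat; lra.
    replace ((2 / r) ^ 2) with (4 / (r * r)) by (field; lra).
    apply Rmult_le_reg_r with (r * r); [nra|]. replace (4 / (r * r) * (r * r)) with 4 by (field; lra). nra. }
  set (p := M ^ 3 / r). set (q := M ^ 2 * nr / sT).
  assert (p0 : 0 < p) by (unfold p; apply Rdiv_lt_0_compat; [apply pow_lt|]; lra).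
  assert (q0 : 0 < q) by (unfold q; apply Rdiv_lt_0_compat; [apply Rmult_lt_0_compat; [apply pow_lt|]|]; lra).
  assert (C0 : 0 <= C) by apply sqrt_pos.
  assert (D0 : 0 <= D) by apply sqrt_pos.
  assert (Lam0 : 0 <= Lam) by (unfold Lam; lra).
  assert (P1 : (A + B) * S <= 10 * M * (1 + Lam)).
  { assert (A * S <= 4 * M * (Lam + 2)) by nra. assert (B * S <= Lam + 2) by nra. nra. }
  assert (P2 : A + B <= 5 * M * (1 + Lam)) by nra.
  assert (E1 : (A + B) * (6 * M ^ 2 * S / r) = 6 * (M ^ 2 / r) * ((A + B) * S)) by (field; lra).
  assert (E2 : (A + B) * (6 * M * nr / sT) = 6 * (M * nr / sT) * (A + B)) by (field; lra).
  assert (m2r : 0 < M ^ 2 / r) by (apply Rdiv_lt_0_compat; [apply pow_lt|]; lra).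
  assert (mnr : 0 < M * nr / sT) by (apply Rdiv_lt_0_compat; [apply Rmult_lt_0_compat|]; lra).
  assert (Q1 : (A + B) * (6 * M ^ 2 * S / r) <= 60 * p * (1 + Lam)).
  { rewrite E1. replace (60 * p * (1 + Lam)) with (6 * (M ^ 2 / r) * (10 * M * (1 + Lam))) by (unfold p; field; lra).
    apply Rmult_le_compat_l; lra. }
  assert (Q2 : (A + B) * (6 * M * nr / sT) <= 30 * q * (1 + Lam)).
  { rewrite E2. replace (30 * q * (1 + Lam)) with (6 * (M * nr / sT) * (5 * M * (1 + Lam))) by (unfold q; field; lra).
    apply Rmult_le_compat_l; lra. }
  assert (Q3 : (A + B) * (2 / r) <= 10 * p * (1 + Lam)).
  { replace ((A + B) * (2 / r)) with (2 / r * (A + B)) by ring.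
    apply Rle_trans with (2 / r * (5 * M * (1 + Lam))).
    apply Rmult_le_compat_l; [apply Rdiv_le_0_compat; lra| lra].
    unfold p. replace (2 / r * (5 * M * (1 + Lam))) with (10 * (M / r) * (1 + Lam)) by (field; lra).
    assert (M / r <= M ^ 3 / r).
    { unfold Rdiv. apply Rmult_le_compat_r. apply Rlt_le, Rinv_0_lt_compat; lra. nra. }
    nra. }
  assert (ABC : (A + B) * C <= (A + B) * (6 * M ^ 2 * S / r + 6 * M * nr / sT)) by (apply Rmult_le_compat_l; lra).
  assert (ABD : (A + B) * D <= (A + B) * (2 / r)) by (apply Rmult_le_compat_l; lra).
  unfold sT in *. fold sT. fold p q.
  nra.
Qed.

Lemma abs_le_inv x e : Rabs x <= e -> - e <= x <= e.
Proof. unfold Rabs; destruct Rcase_abs; intros; lra. Qed.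

Lemma PL_at n f j s : PL n f -> (j < n)%nat -> INR j / INR n <= s <= INR (S j) / INR n ->
  f s = f (INR j / INR n) + (s - INR j / INR n) * INR n * (f (INR (S j) / INR n) - f (INR j / INR n)).
Proof. intros [_ [_ H]] Hj Hs. apply H; auto. Qed.

Lemma affine_derive c0 a0 k c s : is_derive (fun t => c0 + (t - a0) * k * c) s (k * c).
Proof. auto_derive; auto. ring. Qed.

Lemma Derive_PL n f j s : PL n f -> (j < n)%nat -> INR j / INR n < s < INR (S j) / INR n ->
  Derive f s = INR n * (f (INR (S j) / INR n) - f (INR j / INR n)).
Proof.
  intros Hf Hj Hs. apply is_derive_unique.
  apply is_derive_ext_loc with
    (f := fun t => f (INR j / INR n) + (t - INR j / INR n) * INR n * (f (INR (S j) / INR n) - f (INR j / INR n))).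
  - apply (locally_interval _ s (INR j / INR n) (INR (S j) / INR n)).
    + exact (proj1 Hs).
    + exact (proj2 Hs).
    + intros y H1 H2. change (INR j / INR n < y) in H1. change (y < INR (S j) / INR n) in H2. symmetry. apply PL_at; auto; lra.
  - apply affine_derive.
Qed.

Definition Fint (fX fY : R -> R) (s : R) : R :=
  (sqrt (2 * RXstar (fX s) (fY s)) - sqrt (Derive fX s)) ^ 2.

Definition Kerr (M r nr T : R) : R := 140 * (M ^ 3 / r + M ^ 2 * nr / sqrt T).

Lemma interval_bound (M T : R) (n : nat) (fX fY : R -> R) (j : nat) (r : R) :
  1 < M -> 1 < T -> 2 * M <= INR n -> PL n fX -> PL n fY -> G_M M fX -> G_M M fY ->
  0 < r -> r * r = sqrt (INR n) -> sqrt (INR n) <= INR j -> (j < n)%nat ->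
  forall s, INR j / INR n < s < INR (S j) / INR n ->
  / INR n * Fint fX fY s <=
  EXplus (INR j / INR n) (INR (S j) / INR n) (Gamma M T fX fY n) T
  + / INR n * (1 + ((fX (INR (S j) / INR n) - fX (INR j / INR n))
                    + (fY (INR (S j) / INR n) - fY (INR j / INR n))) * INR n)
    * Kerr M r (INR n) T.
Proof.
  intros HM HT HMn HPX HPY HGX HGY Hr Hrr Hjr Hjn s Hs.
  set (nr := INR n) in *.
  assert (Hn : 0 < nr) by lra.
  assert (Hsn1 : 1 < sqrt nr) by (rewrite <- sqrt_1; apply sqrt_lt_1_alt; lra).
  assert (Hsnn : sqrt nr * sqrt nr = nr) by (apply sqrt_sqrt; lra).
  assert (Hr1 : 1 <= r) by nra.
  assert (Hj1 : 1 <= INR j) by lra.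
  assert (HSj : INR (S j) = INR j + 1) by (rewrite S_INR; ring).
  assert (HSjn : INR (S j) <= nr) by (unfold nr; apply le_INR; lia).
  set (a := INR j / nr) in *. set (b := INR (S j) / nr) in *. set (h := / nr).
  assert (Hb : b = a + h) by (unfold b, a, h; rewrite HSj; field; lra).
  assert (Ha0 : 0 < a) by (unfold a; apply Rdiv_lt_0_compat; lra).
  assert (Hh0 : 0 < h) by (unfold h; apply Rinv_0_lt_compat; lra).
  assert (Hhn : h * nr = 1) by (unfold h; field; lra).
  assert (Hha : h <= a).
  { unfold a, h, Rdiv. rewrite <- (Rmult_1_l (/ nr)) at 1.
    apply Rmult_le_compat_r; [apply Rlt_le, Rinv_0_lt_compat|]; lra. }
  assert (Hb1 : b <= 1) by (unfold b; apply Rmult_le_reg_r with nr; [lra|]; unfold Rdiv; rewrite Rmult_assoc, Rinv_l by lra; lra).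
  assert (Hhr : h * (r * r) <= a) by (rewrite Hrr; unfold a, h; unfold Rdiv; rewrite Rmult_comm; apply Rmult_le_compat_r; [apply Rlt_le, Rinv_0_lt_compat|]; lra).
  assert (Har : 1 <= a * (r * r)).
  { rewrite Hrr. unfold a. replace (INR j / nr * sqrt nr) with (INR j * sqrt nr / nr) by (field; lra).
    apply Rmult_le_reg_r with nr; [lra|]. replace (INR j * sqrt nr / nr * nr) with (INR j * sqrt nr) by (field; lra).
    nra. }
  assert (Hhr1 : h * (r * r) <= 1).
  { rewrite Hrr. apply Rmult_le_reg_r with nr; [lra|]. replace (h * sqrt nr * nr) with (sqrt nr) by (unfold h; field; lra). nra. }
  assert (HMr : M * (r * r) <= nr ^ 2) by (rewrite Hrr; nra).
  set (eps := 1 / nr ^ 2).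
  assert (Heps : eps = h * h) by (unfold eps, h; field; lra).
  assert (He0 : 0 < eps) by (rewrite Heps; nra).
  assert (Hea : eps * (2 * M) <= a) by (rewrite Heps; assert (2 * M * h <= 1) by (rewrite <- Hhn; nra); nra).
  assert (H3n : 3 <= nr).
  { assert (H2 : INR 2 < nr) by (simpl; lra). apply INR_lt in H2.
    unfold nr. replace 3 with (INR 3) by (simpl; ring). apply le_INR; lia. }
  assert (Hh3 : 3 * h <= 1) by nra.
  assert (Heh : 2 * eps <= h) by (rewrite Heps; nra).
  destruct HGX as [HfX HbX]. destruct HGY as [HfY HbY].
  set (x0 := fX a). set (x1 := fX b). set (y0 := fY a). set (y1 := fY b).
  assert (Hx0 : a / M <= x0) by (apply (HbX a); lra).
  assert (Hy0 : a / M <= y0) by (apply (HbY a); lra).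
  assert (Hx1 : x1 <= M * b) by (apply (HbX b); lra).
  assert (Hy1 : y1 <= M * b) by (apply (HbY b); lra).
  assert (Hx01 : x0 <= x1) by (destruct HfX as [_ [HmX _]]; apply HmX; lra).
  assert (Hy01 : y0 <= y1) by (destruct HfY as [_ [HmY _]]; apply HmY; lra).
  assert (HaM : 0 < a / M) by (apply Rdiv_lt_0_compat; lra).
  assert (Hy1' : y1 <= M * (a + h)) by (rewrite <- Hb; lra).
  set (xs := fX s). set (ys := fY s).
  assert (Hxs : x0 <= xs <= x1).
  { unfold xs. rewrite (PL_at n fX j s HPX Hjn (conj (Rlt_le _ _ (proj1 Hs)) (Rlt_le _ _ (proj2 Hs)))). change (INR n) with nr. fold a b x0 x1.
    assert (0 <= (s - a) * nr <= 1).
    { split. apply Rmult_le_pos; lra. rewrite Rmult_minus_distr_r.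
      replace (a * nr) with (INR j) by (unfold a; field; lra).
      assert (s * nr <= b * nr) by (apply Rmult_le_compat_r; lra).
      replace (b * nr) with (INR j + 1) in H by (unfold b; rewrite HSj; field; lra). lra. }
    nra. }
  assert (Hys : y0 <= ys <= y1).
  { unfold ys. rewrite (PL_at n fY j s HPY Hjn (conj (Rlt_le _ _ (proj1 Hs)) (Rlt_le _ _ (proj2 Hs)))). change (INR n) with nr. fold a b y0 y1.
    assert (0 <= (s - a) * nr <= 1).
    { split. apply Rmult_le_pos; lra. rewrite Rmult_minus_distr_r.
      replace (a * nr) with (INR j) by (unfold a; field; lra).
      assert (s * nr <= b * nr) by (apply Rmult_le_compat_r; lra).
      replace (b * nr) with (INR j + 1) in H by (unfold b; rewrite HSj; field; lra). lra. }
    nra. }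
  set (L := (x1 - x0) * nr). set (LY := (y1 - y0) * nr).
  assert (HD : Derive fX s = L) by (unfold L; rewrite (Derive_PL n fX j s HPX Hjn Hs); fold nr a b x0 x1; ring).
  set (rho := Rmax (1/2) (ys / xs - 1/2)).
  assert (Hrho : RXstar xs ys = rho) by (apply RXstar_form; lra).
  set (w := 14 * M ^ 3 * ((L + LY) + 2) / (r * r) + 14 * M ^ 2 * nr ^ 2 / T).
  assert (K : forall x y, x0 - eps < x < x1 + eps -> y0 - eps < y < y1 + eps ->
             Rabs (RX (T * x) (T * y) - rho) <= w).
  { intros x y Hx Hy. unfold rho, w.
    replace (L + LY) with (((x1 - x0) + (y1 - y0)) * nr) by (unfold L, LY; ring).
    apply (K_bound M T a h r nr eps x0 x1 y0 y1 xs ys x y); auto; lra. }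
  assert (HaMM : a / M * M = a) by (field; lra).
  assert (HeaM : eps < a / M).
  { apply Rmult_lt_reg_r with M; [lra|]. rewrite HaMM.
    assert (0 < eps * M) by (apply Rmult_lt_0_compat; lra). lra. }
  assert (Hxe : 0 < x0 - eps) by lra.
  assert (Hye : 0 < y0 - eps) by lra.
  assert (RXge : forall x y, x0 - eps < x -> 0 <= y -> 1/2 <= RX (T * x) (T * y)).
  { intros x y Hx Hy. assert (0 < T * x) by (apply Rmult_lt_0_compat; lra).
    assert (0 <= T * y) by (apply Rmult_le_pos; lra).
    rewrite RX_form; [apply Rmax_l| lra | lra]. }
  assert (Gs : Gamma M T fX fY n fX fY) by (apply Gamma_self; try split; auto; lra).
  assert (Bx : forall gX gY s', Gamma M T fX fY n gX gY -> a <= s' <= b ->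
            x0 - eps < gX s' < x1 + eps /\ y0 - eps < gY s' < y1 + eps).
  { intros gX gY s' HG Hs'. apply (box M T fX fY n gX gY j s' HG Hjn Hs'). }
  assert (Dl : forall gX gY, Gamma M T fX fY n gX gY ->
     Rabs (fX a - gX a) < eps /\ Rabs (fX b - gX b) < eps).
  { intros gX gY [HD' _]. destruct (Delta_pt n fX fY gX gY _ j HD' ltac:(lia)) as [A1 _].
    destruct (Delta_pt n fX fY gX gY _ (S j) HD' ltac:(lia)) as [A2 _]. split; assumption. }
  set (e0 := RX (T * x0) (T * y0)).
  destruct (glb_fin (fun r0 => exists s' gX gY, a <= s' <= b /\ Gamma M T fX fY n gX gY /\
                     r0 = RX (T * gX s') (T * gY s')) (Rmax (1/2) (rho - w)) e0) as [rm [Erm [Hrm1 Hrm2]]].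
  { intros r0 [s' [gX [gY [Hs' [HG ->]]]]]. destruct (Bx gX gY s' HG Hs') as [[B1 B2] [B3 B4]].
    apply Rmax_lub. apply RXge; lra. pose proof (K _ _ (conj B1 B2) (conj B3 B4)).
    apply abs_le_inv in H. lra. }
  { exists a, fX, fY. split; [lra|]. split; auto. }
  destruct (lub_fin (fun r0 => exists s' gX gY, a <= s' <= b /\ Gamma M T fX fY n gX gY /\
                     r0 = RX (T * gX s') (T * gY s')) (rho + w) e0) as [rp [Erp [Hrp1 Hrp2]]].
  { intros r0 [s' [gX [gY [Hs' [HG ->]]]]]. destruct (Bx gX gY s' HG Hs') as [[B1 B2] [B3 B4]].
    pose proof (K _ _ (conj B1 B2) (conj B3 B4)).
    apply abs_le_inv in H. lra. }
  { exists a, fX, fY. split; [lra|]. split; auto. }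
  destruct (glb_fin (fun r0 => exists gX gY, Gamma M T fX fY n gX gY /\ r0 = gX a) (x0 - eps) x0)
    as [xma [Exma [Hxma1 Hxma2]]].
  { intros r0 [gX [gY [HG ->]]]. destruct (Dl gX gY HG) as [D1 _]. apply Rabs_def2 in D1. unfold x0; lra. }
  { exists fX, fY; auto. }
  destruct (lub_fin (fun r0 => exists gX gY, Gamma M T fX fY n gX gY /\ r0 = gX a) (x0 + eps) x0)
    as [xpa [Expa [Hxpa1 Hxpa2]]].
  { intros r0 [gX [gY [HG ->]]]. destruct (Dl gX gY HG) as [D1 _]. apply Rabs_def2 in D1. unfold x0; lra. }
  { exists fX, fY; auto. }
  destruct (glb_fin (fun r0 => exists gX gY, Gamma M T fX fY n gX gY /\ r0 = gX b) (x1 - eps) x1)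
    as [xmb [Exmb [Hxmb1 Hxmb2]]].
  { intros r0 [gX [gY [HG ->]]]. destruct (Dl gX gY HG) as [_ D1]. apply Rabs_def2 in D1. unfold x1; lra. }
  { exists fX, fY; auto. }
  destruct (lub_fin (fun r0 => exists gX gY, Gamma M T fX fY n gX gY /\ r0 = gX b) (x1 + eps) x1)
    as [xpb [Expb [Hxpb1 Hxpb2]]].
  { intros r0 [gX [gY [HG ->]]]. destruct (Dl gX gY HG) as [_ D1]. apply Rabs_def2 in D1. unfold x1; lra. }
  { exists fX, fY; auto. }
  pose proof (Rmax_l (1/2) (rho - w)). pose proof (Rmax_r (1/2) (rho - w)).
  assert (Hrho1 : 1/2 <= rho) by apply Rmax_l.
  assert (Hrho2 : rho <= 6 * M ^ 2).
  { unfold rho. apply Rmax_lub. assert (1 <= M ^ 2) by (rewrite <- (pow1 2); apply pow_incr; lra). lra.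
    assert (ys / xs <= 6 * M ^ 2).
    { apply div_le_r; [lra|].
      assert (a <= xs * M) by (rewrite <- HaMM; apply Rmult_le_compat_r; lra).
      assert (M * a <= M * (xs * M)) by (apply Rmult_le_compat_l; lra).
      assert (ys <= 2 * (M * a)) by (assert (M * h <= M * a) by (apply Rmult_le_compat_l; lra); lra).
      replace (6 * M ^ 2 * xs) with (6 * (M * (xs * M))) by ring.
      assert (0 <= M * a) by (apply Rmult_le_pos; lra). lra. }
    lra. }
  unfold EXplus, RXminus, RXplus, xminus, xplus. cbv zeta.
  rewrite Erm, Erp, Exma, Expa, Exmb, Expb. simpl real.
  assert (Hba : b - a = h) by lra. rewrite Hba.
  assert (HL0 : 0 <= L) by (unfold L; apply Rmult_le_pos; lra).
  assert (HLY0 : 0 <= LY) by (unfold LY; apply Rmult_le_pos; lra).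
  pose proof (core (h * (2 * rho)) (h * L) (h * (2 * w)) (h * (2 * h)) (2 * rm * h) (2 * rp * h)
     (xpb - xma) (xmb - xpa)) as C.
  assert (Hw0 : 0 <= w) by (pose proof (Rabs_pos (RX (T * x0) (T * y0) - rho)); pose proof (K x0 y0 ltac:(lra) ltac:(lra)); lra).
  assert (HhL : h * L = x1 - x0) by (unfold L; transitivity ((x1 - x0) * (h * nr)); [ring| rewrite Hhn; ring]).
  assert (Hhh : h * (2 * h) = 2 * eps) by (rewrite Heps; ring).
  rewrite HhL, Hhh in C.
  assert (c1 : 0 <= h * (2 * rho)) by (apply Rmult_le_pos; lra).
  assert (c3 : 0 <= h * (2 * w)) by (apply Rmult_le_pos; lra).
  assert (c5 : 0 <= 2 * rm * h) by (apply Rmult_le_pos; lra).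
  assert (c6 : 2 * rm * h <= 2 * rp * h) by (apply Rmult_le_compat_r; lra).
  assert (c9 : h * (2 * rho) - h * (2 * w) <= 2 * rm * h).
  { replace (h * (2 * rho) - h * (2 * w)) with (2 * (rho - w) * h) by ring. apply Rmult_le_compat_r; lra. }
  assert (c10 : 2 * rp * h <= h * (2 * rho) + h * (2 * w)).
  { replace (h * (2 * rho) + h * (2 * w)) with (2 * (rho + w) * h) by ring. apply Rmult_le_compat_r; lra. }
  specialize (C c1 ltac:(lra) c3 ltac:(lra) c5 c6 ltac:(lra) ltac:(lra)
                c9 c10 ltac:(lra) ltac:(lra)).
  rewrite <- HhL, <- Hhh in C.
  pose proof (num_bound M r nr T h rho L LY HM Hr1 Hh0 Hhr1 Hn HT HL0 HLY0 (conj Hrho1 Hrho2)) as NB.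
  fold w in NB.
  assert (LHS : h * Fint fX fY s = (sqrt (h * (2 * rho)) - sqrt (h * L)) ^ 2).
  { unfold Fint. fold xs ys. rewrite Hrho, HD.
    rewrite (sqrt_mult h (2 * rho)) by lra. rewrite (sqrt_mult h L) by lra.
    replace ((sqrt h * sqrt (2 * rho) - sqrt h * sqrt L) ^ 2) with ((sqrt h * sqrt h) * (sqrt (2 * rho) - sqrt L) ^ 2) by ring.
    rewrite sqrt_sqrt by lra. ring. }
  replace ((1 + (x1 - x0 + (y1 - y0)) * nr)) with (1 + (L + LY)) by (unfold L, LY; ring).
  unfold Kerr. fold h. lra.
Qed.

Lemma cont_aff x0 a k z : continuous (fun s => x0 + (s - a) * k) z.
Proof.
  apply (continuous_plus (fun _ => x0) (fun s => (s - a) * k)). apply continuous_const.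
  apply (continuous_mult (fun s => s - a) (fun _ => k)). 2: apply continuous_const.
  apply (continuous_plus (fun s => s) (fun _ => - a)). apply continuous_id. apply continuous_const.
Qed.

Definition Gfun x0 a k y0 k2 c d s :=
  (sqrt (2 * ((c + ((y0 + (s - a) * k2) / (x0 + (s - a) * k) - 1/2) + Rabs (((y0 + (s - a) * k2) / (x0 + (s - a) * k) - 1/2) - c)) / 2)) - d) ^ 2.

Lemma cont_G x0 a k y0 k2 c d z : 0 < x0 + (z - a) * k ->
  continuous (Gfun x0 a k y0 k2 c d) z.
Proof.
  intros Hz. unfold Gfun.
  assert (Hq : continuous (fun s => (y0 + (s - a) * k2) / (x0 + (s - a) * k) - 1/2) z).
  { apply (continuous_plus (fun s => (y0 + (s - a) * k2) / (x0 + (s - a) * k)) (fun _ => - (1/2))); [|apply continuous_const].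
    apply (continuous_mult (fun s => y0 + (s - a) * k2) (fun s => / (x0 + (s - a) * k))).
    apply cont_aff. apply continuous_Rinv_comp. apply cont_aff. lra. }
  assert (Hm : continuous (fun s => (c + ((y0 + (s - a) * k2) / (x0 + (s - a) * k) - 1/2) + Rabs (((y0 + (s - a) * k2) / (x0 + (s - a) * k) - 1/2) - c)) / 2) z).
  { apply (continuous_mult (fun s => c + ((y0 + (s - a) * k2) / (x0 + (s - a) * k) - 1/2) + Rabs (((y0 + (s - a) * k2) / (x0 + (s - a) * k) - 1/2) - c)) (fun _ => / 2)); [|apply continuous_const].
    apply (continuous_plus (fun s => c + ((y0 + (s - a) * k2) / (x0 + (s - a) * k) - 1/2)) (fun s => Rabs (((y0 + (s - a) * k2) / (x0 + (s - a) * k) - 1/2) - c))).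
    apply (continuous_plus (fun _ => c)). apply continuous_const. exact Hq.
    apply continuous_Rabs_comp. apply (continuous_plus _ (fun _ => - c)). exact Hq. apply continuous_const. }
  apply (continuous_mult (fun s => sqrt (2 * ((c + ((y0 + (s - a) * k2) / (x0 + (s - a) * k) - 1/2) + Rabs (((y0 + (s - a) * k2) / (x0 + (s - a) * k) - 1/2) - c)) / 2)) - d) (fun s => (sqrt (2 * ((c + ((y0 + (s - a) * k2) / (x0 + (s - a) * k) - 1/2) + Rabs (((y0 + (s - a) * k2) / (x0 + (s - a) * k) - 1/2) - c)) / 2)) - d) ^ 1)).
  - apply (continuous_plus _ (fun _ => - d)); [|apply continuous_const].
    apply continuous_sqrt_comp. apply (continuous_mult (fun _ => 2)). apply continuous_const. exact Hm.
  - simpl. apply (continuous_mult _ (fun _ => 1)); [|apply continuous_const].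
    apply (continuous_plus _ (fun _ => - d)); [|apply continuous_const].
    apply continuous_sqrt_comp. apply (continuous_mult (fun _ => 2)). apply continuous_const. exact Hm.
Qed.

Lemma Rmax_abs c u : Rmax c u = (c + u + Rabs (u - c)) / 2.
Proof. unfold Rmax, Rabs; destruct Rle_dec; destruct Rcase_abs; lra. Qed.

Lemma interval_int (M T : R) (n : nat) (fX fY : R -> R) (j : nat) (r : R) :
  1 < M -> 1 < T -> 2 * M <= INR n -> PL n fX -> PL n fY -> G_M M fX -> G_M M fY ->
  0 < r -> r * r = sqrt (INR n) -> sqrt (INR n) <= INR j -> (j < n)%nat ->
  ex_RInt (Fint fX fY) (INR j / INR n) (INR (S j) / INR n) /\
  RInt (Fint fX fY) (INR j / INR n) (INR (S j) / INR n) <=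
  EXplus (INR j / INR n) (INR (S j) / INR n) (Gamma M T fX fY n) T
  + / INR n * (1 + ((fX (INR (S j) / INR n) - fX (INR j / INR n))
                    + (fY (INR (S j) / INR n) - fY (INR j / INR n))) * INR n)
    * Kerr M r (INR n) T.
Proof.
  intros HM HT HMn HPX HPY HGX HGY Hr Hrr Hjr Hjn.
  pose proof (interval_bound M T n fX fY j r HM HT HMn HPX HPY HGX HGY Hr Hrr Hjr Hjn) as IB.
  set (E := EXplus (INR j / INR n) (INR (S j) / INR n) (Gamma M T fX fY n) T) in *.
  set (er := / INR n * (1 + ((fX (INR (S j) / INR n) - fX (INR j / INR n))
                    + (fY (INR (S j) / INR n) - fY (INR j / INR n))) * INR n)
    * Kerr M r (INR n) T) in *.
  assert (Hn : 0 < INR n) by lra.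
  assert (Hsn1 : 1 < sqrt (INR n)) by (rewrite <- sqrt_1; apply sqrt_lt_1_alt; lra).
  assert (HSj : INR (S j) = INR j + 1) by (rewrite S_INR; ring).
  set (a := INR j / INR n) in *. set (b := INR (S j) / INR n) in *.
  assert (Ha0 : 0 < a) by (unfold a; apply Rdiv_lt_0_compat; lra).
  assert (Hab : a < b) by (unfold a, b; rewrite HSj; unfold Rdiv; apply Rmult_lt_compat_r; [apply Rinv_0_lt_compat|]; lra).
  assert (Hba : b - a = / INR n) by (unfold a, b; rewrite HSj; field; lra).
  destruct HGX as [HfX HbX]. destruct HGY as [HfY HbY].
  assert (Hb1 : b <= 1).
  { unfold b. apply Rmult_le_reg_r with (INR n); [lra|]. unfold Rdiv; rewrite Rmult_assoc, Rinv_l by lra.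
    rewrite Rmult_1_r, Rmult_1_l. apply le_INR; lia. }
  assert (Hx0 : a / M <= fX a) by (apply (HbX a); lra).
  assert (HaM : 0 < a / M) by (apply Rdiv_lt_0_compat; lra).
  assert (Hx01 : fX a <= fX b) by (destruct HfX as [_ [HmX _]]; apply HmX; lra).
  assert (Hy01 : fY a <= fY b) by (destruct HfY as [_ [HmY _]]; apply HmY; lra).
  set (k := INR n * (fX b - fX a)). set (k2 := INR n * (fY b - fY a)).
  assert (Hk : 0 <= k) by (unfold k; apply Rmult_le_pos; lra).
  assert (Hk2 : 0 <= k2) by (unfold k2; apply Rmult_le_pos; lra).
  set (G := Gfun (fX a) a k (fY a) k2 (1/2) (sqrt k)).
  assert (EQ : forall s, Rmin a b < s < Rmax a b -> Fint fX fY s = G s).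
  { intros s Hs. rewrite Rmin_left, Rmax_right in Hs by lra.
    unfold Fint, G, Gfun.
    rewrite (Derive_PL n fX j s HPX Hjn Hs). fold a b k.
    rewrite (PL_at n fX j s HPX Hjn (conj (Rlt_le _ _ (proj1 Hs)) (Rlt_le _ _ (proj2 Hs)))).
    rewrite (PL_at n fY j s HPY Hjn (conj (Rlt_le _ _ (proj1 Hs)) (Rlt_le _ _ (proj2 Hs)))).
    fold a b.
    replace ((s - a) * INR n * (fX b - fX a)) with ((s - a) * k) by (unfold k; ring).
    replace ((s - a) * INR n * (fY b - fY a)) with ((s - a) * k2) by (unfold k2; ring).
    assert (0 <= (s - a) * k) by (apply Rmult_le_pos; lra).
    assert (0 <= (s - a) * k2) by (apply Rmult_le_pos; lra).
    assert (Hy0 : a / M <= fY a) by (apply (HbY a); lra).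
    rewrite RXstar_form by lra. rewrite Rmax_abs. reflexivity. }
  assert (ExG : ex_RInt G a b).
  { apply (@ex_RInt_continuous R_CompleteNormedModule). intros z Hz. rewrite Rmin_left, Rmax_right in Hz by lra.
    apply cont_G. assert (0 <= (z - a) * k) by (apply Rmult_le_pos; lra). lra. }
  assert (ExF : ex_RInt (Fint fX fY) a b).
  { apply ex_RInt_ext with G; [intros; symmetry; apply EQ; auto| exact ExG]. }
  split; [exact ExF|].
  rewrite (RInt_ext (Fint fX fY) G) by exact EQ.
  apply Rle_trans with (RInt (fun _ => INR n * (E + er)) a b).
  - apply RInt_le; [lra| exact ExG| apply ex_RInt_const|].
    intros s Hs. rewrite <- EQ by (rewrite Rmin_left, Rmax_right; lra).
    specialize (IB s Hs). fold E er in IB.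
    apply Rmult_le_reg_l with (/ INR n); [apply Rinv_0_lt_compat; lra|].
    replace (/ INR n * (INR n * (E + er))) with (E + er) by (field; lra). lra.
  - rewrite RInt_const. unfold scal; simpl; unfold mult; simpl. rewrite Hba.
    right. field. lra.
Qed.

Lemma plus_R (x y : R) : @plus R_AbelianMonoid x y = x + y.
Proof. reflexivity. Qed.

Lemma sum_bound (M T : R) (n : nat) (fX fY : R -> R) (k : nat) (r : R) :
  1 < M -> 1 < T -> 2 * M <= INR n -> PL n fX -> PL n fY -> G_M M fX -> G_M M fY ->
  0 < r -> r * r = sqrt (INR n) -> sqrt (INR n) <= INR k ->
  forall m, (k + S m <= n)%nat ->
  ex_RInt (Fint fX fY) (INR k / INR n) (INR (k + S m) / INR n) /\
  RInt (Fint fX fY) (INR k / INR n) (INR (k + S m) / INR n) <=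
  sum_n_m (fun j => EXplus (INR j / INR n) (INR (S j) / INR n) (Gamma M T fX fY n) T) k (k + m)
  + Kerr M r (INR n) T * (INR (S m) / INR n
      + (fX (INR (k + S m) / INR n) - fX (INR k / INR n))
      + (fY (INR (k + S m) / INR n) - fY (INR k / INR n))).
Proof.
  intros HM HT HMn HPX HPY HGX HGY Hr Hrr Hk.
  assert (Hn : 0 < INR n) by lra.
  induction m as [|m IH]; intros Hm.
  - replace (k + 1)%nat with (S k) by lia. replace (k + 0)%nat with k by lia.
    rewrite sum_n_n.
    destruct (interval_int M T n fX fY k r HM HT HMn HPX HPY HGX HGY Hr Hrr Hk ltac:(lia)) as [E1 E2].
    split; auto. eapply Rle_trans; [exact E2|]. right. change (INR 1) with 1. field. lra.
  - destruct (IH ltac:(lia)) as [E1 E2].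
    replace (k + S m)%nat with (S (k + m)) in * by lia.
    replace (k + S (S m))%nat with (S (S (k + m))) by lia.
    rewrite sum_n_Sm by lia.
    set (j := S (k + m)) in *.
    assert (Hj : sqrt (INR n) <= INR j) by (eapply Rle_trans; [exact Hk| apply le_INR; unfold j; lia]).
    destruct (interval_int M T n fX fY j r HM HT HMn HPX HPY HGX HGY Hr Hrr Hj ltac:(unfold j; lia)) as [F1 F2].
    split.
    + eapply ex_RInt_Chasles; eauto.
    + rewrite <- (RInt_Chasles _ _ (INR j / INR n)) by auto.
      assert (HSS : INR (S (S m)) = INR (S m) + 1) by (rewrite S_INR; ring).
      rewrite HSS. rewrite plus_R.
      set (S0 := sum_n_m _ k (k + m)) in *.
      set (E := EXplus (INR j / INR n) (INR (S j) / INR n) (Gamma M T fX fY n) T) in *.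
      set (K := Kerr M r (INR n) T) in *.
      assert (Eq : / INR n * (1 + (fX (INR (S j) / INR n) - fX (INR j / INR n) +
          (fY (INR (S j) / INR n) - fY (INR j / INR n))) * INR n) * K
          = K * (/ INR n + (fX (INR (S j) / INR n) - fX (INR j / INR n) +
          (fY (INR (S j) / INR n) - fY (INR j / INR n))))) by (field; lra).
      rewrite Eq in F2.
      replace ((INR (S m) + 1) / INR n) with (INR (S m) / INR n + / INR n) by (field; lra).
      change (plus S0 E) with (S0 + E).
      lra.
Qed.

Lemma cel_ge x : 0 < x -> x <= INR (cel x).
Proof.
  intros Hx. unfold cel. destruct (base_Int_part (- x)) as [H1 _].
  set (z := (- Int_part (- x))%Z).
  assert (Hz : x <= IZR z) by (unfold z; rewrite opp_IZR; lra).
  assert (Hz0 : (0 <= z)%Z) by (apply le_IZR; lra).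
  rewrite INR_IZR_INZ, Z2Nat.id by exact Hz0. exact Hz.
Qed.

Lemma flr_le y : 0 <= y -> INR (flr y) <= y.
Proof.
  intros Hy. unfold flr. destruct (base_Int_part y) as [H1 H2].
  assert (h : (0 <= Int_part y)%Z).
  { assert (IZR (-1) < IZR (Int_part y)) by (simpl; lra). apply lt_IZR in H. lia. }
  rewrite INR_IZR_INZ, Z2Nat.id by exact h. exact H1.
Qed.

Theorem proposition2p4 :
  exists C : R, forall (theta M T : R) (n : nat) (fX fY : R -> R) (k : nat),
    0 < theta <= 1 -> 1 < M -> 1 < T -> 2 * M <= INR n ->
    PL n fX -> PL n fY -> G_M M fX -> G_M M fY ->
    (cel (sqrt (INR n)) <= k)%nat -> (k <= flr (theta * INR n) - 1)%nat ->
    sum_n_m (fun j : nat =>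
               EXplus (INR j / INR n) (INR (S j) / INR n) (Gamma M T fX fY n) T)
            k (flr (theta * INR n) - 1)
    >= RInt (fun s => (sqrt (2 * RXstar (fX s) (fY s)) - sqrt (Derive fX s)) ^ 2)
            (INR k / INR n) (INR (flr (theta * INR n)) / INR n)
       - C * (M ^ 4 / Rpower (INR n) (1 / 4) + M ^ 3 * INR n / sqrt T).
Proof.
  exists 420. intros theta M T n fX fY k Hth HM HT HMn HPX HPY HGX HGY Hk1 Hk2.
  assert (Hn : 0 < INR n) by lra.
  assert (Hsn1 : 1 < sqrt (INR n)) by (rewrite <- sqrt_1; apply sqrt_lt_1_alt; lra).
  assert (Hk : sqrt (INR n) <= INR k).
  { eapply Rle_trans; [apply cel_ge; lra| apply le_INR; exact Hk1]. }
  set (N := flr (theta * INR n)) in *.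
  assert (HN : INR N <= INR n).
  { eapply Rle_trans; [apply flr_le; apply Rmult_le_pos; lra|]. nra. }
  apply INR_le in HN.
  assert (Hk0 : (1 <= k)%nat) by (apply INR_le; simpl; lra).
  set (r := Rpower (INR n) (1 / 4)).
  assert (Hr : 0 < r) by (unfold r, Rpower; apply exp_pos).
  assert (Hrr : r * r = sqrt (INR n)).
  { unfold r. rewrite <- Rpower_plus. rewrite <- Rpower_sqrt by lra. f_equal. field. }
  set (m := (N - 1 - k)%nat).
  destruct (sum_bound M T n fX fY k r HM HT HMn HPX HPY HGX HGY Hr Hrr Hk m ltac:(unfold m; lia)) as [_ B].
  replace (k + S m)%nat with N in B by (unfold m; lia).
  replace (k + m)%nat with (N - 1)%nat in B by (unfold m; lia).
  change (fun s => (sqrt (2 * RXstar (fX s) (fY s)) - sqrt (Derive fX s)) ^ 2) with (Fint fX fY).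
  set (S0 := sum_n_m _ k (N - 1)) in *.
  set (I0 := RInt (Fint fX fY) _ _) in *.
  destruct HGX as [HfX HbX]. destruct HGY as [HfY HbY].
  assert (H01 : 0 <= INR k / INR n /\ INR N / INR n <= 1 /\ INR k / INR n <= INR N / INR n).
  { split; [apply Rdiv_le_0_compat; [apply pos_INR| lra]|]. split.
    - apply Rmult_le_reg_r with (INR n); [lra|]. unfold Rdiv; rewrite Rmult_assoc, Rinv_l by lra.
      rewrite Rmult_1_r, Rmult_1_l. apply le_INR; lia.
    - unfold Rdiv; apply Rmult_le_compat_r; [apply Rlt_le, Rinv_0_lt_compat; lra| apply le_INR; lia]. }
  pose proof (HbX (INR N / INR n) ltac:(lra)). pose proof (HbX (INR k / INR n) ltac:(lra)).
  pose proof (HbY (INR N / INR n) ltac:(lra)). pose proof (HbY (INR k / INR n) ltac:(lra)).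
  assert (Hm1 : INR (S m) / INR n <= 1).
  { apply Rmult_le_reg_r with (INR n); [lra|]. unfold Rdiv; rewrite Rmult_assoc, Rinv_l by lra.
    rewrite Rmult_1_r, Rmult_1_l. apply le_INR; unfold m; lia. }
  assert (Hm0 : 0 <= INR (S m) / INR n) by (apply Rdiv_le_0_compat; [apply pos_INR| lra]).
  assert (0 <= INR k / INR n / M) by (apply Rdiv_le_0_compat; lra).
  assert (M * (INR N / INR n) <= M) by (rewrite <- (Rmult_1_r M) at 2; apply Rmult_le_compat_l; lra).
  set (K := Kerr M r (INR n) T) in *.
  assert (HK0 : 0 <= K).
  { unfold K, Kerr. assert (0 < sqrt T) by (apply sqrt_lt_R0; lra).
    assert (0 < M ^ 3 / r) by (apply Rdiv_lt_0_compat; [apply pow_lt|]; lra).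
    assert (0 < M ^ 2 * INR n / sqrt T) by (apply Rdiv_lt_0_compat; [apply Rmult_lt_0_compat; [apply pow_lt|]|]; lra).
    lra. }
  assert (Hsum : INR (S m) / INR n + (fX (INR N / INR n) - fX (INR k / INR n)) +
     (fY (INR N / INR n) - fY (INR k / INR n)) <= 3 * M) by lra.
  assert (K * (INR (S m) / INR n + (fX (INR N / INR n) - fX (INR k / INR n)) +
     (fY (INR N / INR n) - fY (INR k / INR n))) <= K * (3 * M)) by (apply Rmult_le_compat_l; lra).
  assert (EK : K * (3 * M) = 420 * (M ^ 4 / r + M ^ 3 * INR n / sqrt T)).
  { assert (sT : sqrt T <> 0) by (apply Rgt_not_eq, sqrt_lt_R0; lra).
    assert (rn : r <> 0) by lra.
    unfold K, Kerr. field. split; auto. }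
  lra.
Qed.
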